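(* Let $\mathcal{H}$ be a complex Hilbert space, $A\in\mathcal{B}(\mathcal{H})$ positive and $S\in\mathcal{B}_A(\mathcal{H})$. Then $$d\omega_A^2(S)\le \omega_A^2\left(S^{\sharp_A}S+S\right)+\omega_A\left(S^{\sharp_A}S^2\right)+\frac12\left\|\left(S^{\sharp_A}S\right)^2+S^{\sharp_A}S\right\|_A .$$
   Context: $\mathcal{B}(\mathcal{H})$ denotes the bounded linear operators on $\mathcal{H}$. For positive $A$, $\langle x,z\rangle_A=\langle Ax,z\rangle$ and $\|z\|_A=\|A^{1/2}z\|$. $\mathcal{B}_A(\mathcal{H})$ is the set of $S\in\mathcal{B}(\mathcal{H})$ for which some $R\in\mathcal{B}(\mathcal{H})$ satisfies $AR=S^*A$; for such $S$, $S^{\sharp_A}=A^{\dagger}S^*A$ with $A^\dagger$ the Moore–Penrose inverse of $A$. For operators $T$ bounded with respect to $\|\cdot\|_A$: $\|T\|_A=\sup_{\|z\|_A=1}\|Tz\|_A$, $\omega_A(T)=\sup_{\|z\|_A=1}|\langle Tz,z\rangle_A|$, and $d\omega_A(T)=\sup_{\|z\|_A=1}(|\langle Tz,z\rangle_A|^2+\|Tz\|_A^4)^{1/2}$. *)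

(* Defs.v *)
From HB Require Import structures.
From mathcomp Require Import all_boot all_order all_algebra.
From mathcomp Require Import complex.
From mathcomp Require Import boolp classical_sets reals.
From Stdlib Require Import ClassicalEpsilon.

Set Implicit Arguments. Unset Strict Implicit. Unset Printing Implicit Defensive.
Import Order.TTheory GRing.Theory Num.Theory.
Local Open Scope ring_scope.
Local Open Scope classical_set_scope.

Section Hilbert.
Variables (R : realType) (V : lmodType R[i]) (ip : V -> V -> R[i]).

Definition is_inner_product : Prop :=
  (forall (a : R[i]) (x y z : V), ip (a *: x + y) z = a * ip x z + ip y z) /\
  (forall x y : V, ip y x = conjc (ip x y)) /\
  (forall x : V, 0 <= ip x x) /\
  (forall x : V, ip x x = 0 -> x = 0).

Definition hnorm (x : V) : R := Num.sqrt (complex.Re (ip x x)).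

Definition hcomplete : Prop :=
  forall u : nat -> V,
    (forall e : R, 0 < e -> exists N : nat, forall m n : nat,
        (N <= m)%N -> (N <= n)%N -> hnorm (u m - u n) < e) ->
    exists l : V, forall e : R, 0 < e -> exists N : nat, forall n : nat,
        (N <= n)%N -> hnorm (u n - l) < e.

Definition is_hilbert : Prop := is_inner_product /\ hcomplete.

Definition bounded_op (T : V -> V) : Prop :=
  (forall (a : R[i]) (x y : V), T (a *: x + y) = a *: T x + T y) /\
  (exists M : R, forall x : V, hnorm (T x) <= M * hnorm x).

Definition adjoint (T : V -> V) : V -> V :=
  epsilon (inhabits (fun x : V => x))
    (fun T' : V -> V => forall x y : V, ip (T x) y = ip x (T' y)).

Definition positive_op (A : V -> V) : Prop :=
  bounded_op A /\ forall x : V, 0 <= ip (A x) x.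

(* Moore-Penrose inverse of A, defined on R(A) + R(A)^perp:
   A^dagger y is the unique x in N(A)^perp with A x - y in R(A)^perp
   (i.e. A x is the R(A)-component of y).  Unspecified outside that domain. *)
Definition mp_inverse (A : V -> V) (y : V) : V :=
  epsilon (inhabits (0 : V))
    (fun x : V => (forall k : V, A k = 0 -> ip x k = 0) /\
                  (forall z : V, ip (A x - y) (A z) = 0)).

Definition in_BA (A S : V -> V) : Prop :=
  bounded_op S /\
  exists Rop : V -> V, bounded_op Rop /\ forall x : V, A (Rop x) = adjoint S (A x).

Definition sharpA (A S : V -> V) : V -> V :=
  fun x => mp_inverse A (adjoint S (A x)).

Definition ipA (A : V -> V) (x z : V) : R[i] := ip (A x) z.
Definition normA (A : V -> V) (z : V) : R := Num.sqrt (complex.Re (ipA A z z)).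

Definition unit_sphereA (A : V -> V) : set V := [set z | normA A z = 1].

Definition opnormA (A T : V -> V) : R :=
  sup [set normA A (T z) | z in unit_sphereA A].
Definition numradA (A T : V -> V) : R :=
  sup [set Normc.normc (ipA A (T z) z) | z in unit_sphereA A].
Definition dnumradA (A T : V -> V) : R :=
  sup [set Num.sqrt (Normc.normc (ipA A (T z) z) ^+ 2 + normA A (T z) ^+ 4)
      | z in unit_sphereA A].

End Hilbert.

(* Main.v *)
Require Import Defs.
From HB Require Import structures.
From mathcomp Require Import all_boot all_order all_algebra.
From mathcomp Require Import complex.
From mathcomp Require Import boolp classical_sets reals.
From mathcomp Require Import ring lra.
From Stdlib Require Import ClassicalEpsilon.
Import Order.TTheory GRing.Theory Num.Theory.
Local Open Scope ring_scope.
Set Implicit Arguments. Unset Strict Implicit. Unset Printing Implicit Defensive.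
Local Notation RE := complex.Re.
Local Notation IM := complex.Im.
Local Notation rc x := ((x)%:C)%C.
Local Notation nc := Normc.normc.

Section Cx.
Variable R : realType.
Lemma REC (x : R) : RE (rc x) = x. Proof. by []. Qed.
Lemma RED (x y : R[i]) : RE (x + y) = RE x + RE y. Proof. by case: x; case: y. Qed.
Lemma REN (x : R[i]) : RE (- x) = - RE x. Proof. by case: x. Qed.
Lemma cjK {F : pzRingType} (x : F[i]) : conjc (conjc x) = x. Proof. by case: x => a b /=; rewrite opprK. Qed.
Lemma cjM (x y : R[i]) : conjc (x * y) = conjc x * conjc y. Proof. exact: rmorphM. Qed.
Lemma cjR {F : pzRingType} (x : F) : conjc (rc x) = rc x. Proof. by rewrite /= oppr0. Qed.
Lemma REJ (x : R[i]) : RE (conjc x) = RE x. Proof. by case: x. Qed.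
Lemma ncE (x : R[i]) : nc x = Num.sqrt (RE x ^+ 2 + IM x ^+ 2). Proof. by case: x. Qed.
Lemma nc2E (x : R[i]) : nc x ^+ 2 = RE x ^+ 2 + IM x ^+ 2.
Proof. by rewrite ncE sqr_sqrtr // addr_ge0 // sqr_ge0. Qed.
Lemma nc_ge0 (x : R[i]) : 0 <= nc x. Proof. by rewrite ncE sqrtr_ge0. Qed.
Lemma sqrt_le {a b : R} : a <= b -> Num.sqrt a <= Num.sqrt b.
Proof. by move=> h; apply: ler_wsqrtr. Qed.
Lemma le_sqrt_sum (a b : R) : a <= Num.sqrt (a ^+ 2 + b ^+ 2).
Proof.
have [a0|a0] := lerP a 0; first by apply: le_trans a0 _; rewrite sqrtr_ge0.
have h : a ^+ 2 <= a ^+ 2 + b ^+ 2 by rewrite lerDl sqr_ge0.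
have := sqrt_le h; rewrite sqrtr_sqr ger0_norm //; exact: ltW.
Qed.
Lemma RE_le_nc (x : R[i]) : RE x <= nc x. Proof. by rewrite ncE le_sqrt_sum. Qed.
Lemma ncJ (x : R[i]) : nc (conjc x) = nc x.
Proof. by rewrite !ncE REJ; case: x => a b /=; rewrite sqrrN. Qed.
Lemma ncN (x : R[i]) : nc (- x) = nc x. Proof. exact: normcN. Qed.
Lemma ncM (x y : R[i]) : nc (x * y) = nc x * nc y. Proof. exact: Normc.normcM. Qed.
Lemma ncD (x y : R[i]) : nc (x + y) <= nc x + nc y. Proof. exact: le_normcD. Qed.
Lemma ncR (x : R) : nc (rc x) = `|x|.
Proof. by rewrite ncE /= expr0n addr0 sqrtr_sqr. Qed.
Lemma nc2 : nc (2 : R[i]) = 2.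
Proof. have -> : (2 : R[i]) = rc 2 by rewrite rmorph_nat. by rewrite ncR ger0_norm. Qed.
Lemma nc_eq0 (x : R[i]) : nc x = 0 -> x = 0. Proof. exact: Normc.eq0_normc. Qed.
Lemma mulJ (x : R[i]) : x * conjc x = rc (nc x ^+ 2).
Proof. rewrite nc2E; case: x => a b; simpc. by congr (_ +i* _)%C; ring. Qed.
End Cx.

Section Semi.
Variables (R : realType) (V : lmodType R[i]) (P : V -> V -> R[i]).
Hypothesis PL : forall (a : R[i]) (x y z : V), P (a *: x + y) z = a * P x z + P y z.
Hypothesis PH : forall x y : V, P y x = conjc (P x y).
Hypothesis Ppos : forall x : V, 0 <= P x x.

Lemma P0l z : P 0 z = 0.
Proof.
have := PL 1 0 0 z; rewrite scale1r addr0 mul1r => h.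
by apply: (addrI (P 0 z)); rewrite addr0 -h.
Qed.
Lemma PDl x y z : P (x + y) z = P x z + P y z.
Proof. by have := PL 1 x y z; rewrite scale1r mul1r. Qed.
Lemma PZl a x z : P (a *: x) z = a * P x z.
Proof. by have := PL a x 0 z; rewrite addr0 P0l addr0. Qed.
Lemma PNl x z : P (- x) z = - P x z.
Proof. by rewrite -scaleN1r PZl mulN1r. Qed.
Lemma PBl x y z : P (x - y) z = P x z - P y z.
Proof. by rewrite PDl PNl. Qed.
Lemma P0r z : P z 0 = 0.
Proof using PL PH Ppos. by rewrite PH P0l rmorph0. Qed.
Lemma PDr x y z : P z (x + y) = P z x + P z y.
Proof using PL PH Ppos. by rewrite !(PH _ z) PDl rmorphD. Qed.
Lemma PZr a x z : P z (a *: x) = conjc a * P z x.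
Proof using PL PH Ppos. by rewrite !(PH _ z) PZl rmorphM. Qed.
Lemma PNr x z : P z (- x) = - P z x.
Proof using PL PH Ppos. by rewrite !(PH _ z) PNl rmorphN. Qed.
Lemma PBr x y z : P z (x - y) = P z x - P z y.
Proof using PL PH Ppos. by rewrite PDr PNr. Qed.

Definition Q x := RE (P x x).
Definition N x := Num.sqrt (Q x).

Lemma Preal x : P x x = rc (Q x).
Proof using PL PH Ppos. rewrite /Q; have := ger0_Im (Ppos x); by case: (P x x) => a b /= ->. Qed.
Lemma Q_ge0 x : 0 <= Q x.
Proof using PL PH Ppos. by have := Ppos x; rewrite (Preal x) lecR. Qed.
Lemma N_ge0 x : 0 <= N x. Proof using PL PH Ppos. exact: sqrtr_ge0. Qed.
Lemma N2 x : N x ^+ 2 = Q x. Proof using PL PH Ppos. by rewrite sqr_sqrtr // Q_ge0. Qed.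

Lemma Pexp u k (mu : R[i]) : P (u - mu *: k) (u - mu *: k)
  = P u u - conjc mu * P u k - mu * conjc (P u k) + mu * conjc mu * P k k.
Proof using PL PH Ppos. rewrite PBl !PBr !PZl !PZr (PH u k); ring. Qed.

Lemma Qexp u k (s : R) :
  Q (u - (rc s * P u k) *: k) = Q u - 2 * s * nc (P u k) ^+ 2 + s ^+ 2 * nc (P u k) ^+ 2 * Q k.
Proof using PL PH Ppos.
rewrite /Q Pexp (Preal u) (Preal k) nc2E; rewrite -/(Q u) -/(Q k).
case: (P u k) => a b; simpc => /=. ring.
Qed.

Lemma CS2 x y : nc (P x y) ^+ 2 <= Q x * Q y.
Proof using PL PH Ppos.
have H s := Q_ge0 (x - (rc s * P x y) *: y); move: H.
set n2 := nc (P x y) ^+ 2 => H.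
have n2ge : 0 <= n2 by rewrite sqr_ge0.
have px := Q_ge0 x; have [qy|qy] := ltrP 0 (Q y).
  have := H (Q y)^-1; rewrite Qexp -/n2.
  have hv : (Q y)^-1 * Q y = 1 by rewrite mulVf // gt_eqF.
  set t := (Q y)^-1 in hv *; set q := Q y in qy hv *.
  have e : t ^+ 2 * n2 * q = t * n2 by rewrite -[RHS]mulr1 -hv; ring.
  have e2 : q * (t * n2) = n2 by rewrite mulrA [q * t]mulrC hv mul1r.
  rewrite e => {}H. nra.
have q0 : Q y = 0 by apply/eqP; rewrite eq_le qy Q_ge0.
have [n0|n0] := lerP n2 0; first by rewrite q0 mulr0.
have := H ((Q x + 1) * n2^-1); rewrite Qexp -/n2 q0.
have hv : n2^-1 * n2 = 1 by rewrite mulVf // gt_eqF.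
set t := n2^-1 in hv *.
have e : 2 * ((Q x + 1) * t) * n2 = 2 * (Q x + 1) by rewrite -[RHS]mulr1 -hv; ring.
rewrite mulr0 addr0 e. lra.
Qed.

Lemma CS x y : nc (P x y) <= N x * N y.
Proof using PL PH Ppos.
rewrite /N -sqrtrM ?Q_ge0 //.
by have := sqrt_le (CS2 x y); rewrite sqrtr_sqr ger0_norm // ?nc_ge0.
Qed.

Lemma Q_add x y : Q (x + y) = Q x + Q y + 2 * RE (P x y).
Proof using PL PH Ppos. rewrite /Q PDl !PDr (PH x y) !RED REJ; lra. Qed.

Lemma N_tri x y : N (x + y) <= N x + N y.
Proof using PL PH Ppos.
have h : Q (x + y) <= (N x + N y) ^+ 2.
  rewrite Q_add sqrrD !N2.
  have := le_trans (RE_le_nc (P x y)) (CS x y); lra.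
have := sqrt_le h; rewrite sqrtr_sqr ger0_norm //.
by rewrite addr_ge0 ?N_ge0.
Qed.

Lemma QN x : Q (- x) = Q x. Proof using PL PH Ppos. by rewrite /Q PNl PNr opprK. Qed.
Lemma NN x : N (- x) = N x. Proof using PL PH Ppos. by rewrite /N QN. Qed.
Lemma NB x y : N (x - y) = N (y - x). Proof using PL PH Ppos. by rewrite -NN opprB. Qed.
Lemma QZ a x : Q (a *: x) = nc a ^+ 2 * Q x.
Proof using PL PH Ppos. by rewrite /Q PZl PZr mulrA mulJ (Preal x) -rmorphM. Qed.
Lemma NZ a x : N (a *: x) = nc a * N x.
Proof using PL PH Ppos. by rewrite /N QZ sqrtrM ?sqr_ge0 // sqrtr_sqr ger0_norm ?nc_ge0. Qed.
Lemma Q0 : Q 0 = 0. Proof using PL PH Ppos. by rewrite /Q P0l. Qed.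
Lemma N0 : N 0 = 0. Proof using PL PH Ppos. by rewrite /N Q0 sqrtr0. Qed.

Lemma Buzano a b e : Q e = 1 ->
  2 * nc (P a e) * nc (P e b) <= N a * N b + nc (P a b).
Proof using PL PH Ppos.
move=> He; set al := P a e.
have Pee : P e e = 1 by rewrite Preal He.
have Qw : Q (a - (2 * al) *: e) = Q a.
  rewrite /Q Pexp -/al Pee rmorphM rmorph_nat mulr1; congr RE; ring.
have hw : nc (P (a - (2 * al) *: e) b) <= N a * N b.
  by have := CS (a - (2 * al) *: e) b; rewrite [N (a - _)]/N Qw.
rewrite PBl PZl in hw.
have -> : 2 * nc al * nc (P e b) = nc (P a b - (P a b - 2 * al * P e b)).
  by rewrite opprB addrC subrK !ncM nc2.
apply: le_trans (ncD _ _) _; rewrite ncN; lra.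
Qed.
End Semi.

Section Reals.
Variable R : realType.
Lemma le0_small (a C : R) : 0 <= C -> (forall e, 0 < e -> a <= C * e) -> a <= 0.
Proof.
move=> C0 h; rewrite leNgt; apply/negP => a0.
have hC : 0 < C + 1 by lra.
have := h (a / (C + 1)) (divr_gt0 a0 hC).
have e : (C + 1) * (a / (C + 1)) = a by rewrite mulrC divfK // gt_eqF.
set t := a / (C + 1) in e *.
have t0 : 0 < t by rewrite /t divr_gt0.
nra.
Qed.
Lemma sqrtD_le (a b : R) : 0 <= a -> 0 <= b -> Num.sqrt (a + b) <= Num.sqrt a + Num.sqrt b.
Proof.
move=> a0 b0.
have h : a + b <= (Num.sqrt a + Num.sqrt b) ^+ 2.
  rewrite sqrrD !sqr_sqrtr //.
  have := mulr_ge0 (sqrtr_ge0 a) (sqrtr_ge0 b); lra.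
have := sqrt_le h; rewrite sqrtr_sqr ger0_norm //.
by rewrite addr_ge0 ?sqrtr_ge0.
Qed.
Lemma exists_nat (c : R) : exists K : nat, c < K%:R.
Proof.
exists (Num.bound `|c|); apply: le_lt_trans (real_ler_norm _) _; first exact: num_real.
by apply: archi_boundP.
Qed.
Lemma inv_nat_le (n K : nat) : (K <= n)%N -> (n.+1%:R : R)^-1 <= (K.+1%:R)^-1.
Proof. by move=> h; rewrite lef_pV2 ?posrE ?ltr0Sn // ler_nat. Qed.
Lemma inv_nat_small (e : R) : 0 < e -> exists K : nat, (K.+1%:R : R)^-1 < e.
Proof.
move=> e0; have [K hK] := exists_nat e^-1; exists K.
rewrite -[e]invrK ltf_pV2 ?posrE ?invr_gt0 ?ltr0Sn //.
by apply: lt_trans hK _; rewrite ltr_nat.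
Qed.
End Reals.

Section Hil.
Local Open Scope classical_set_scope.
Variables (R : realType) (V : lmodType R[i]) (ip : V -> V -> R[i]).
Hypothesis IL : forall (a : R[i]) (x y z : V), ip (a *: x + y) z = a * ip x z + ip y z.
Hypothesis IH : forall x y : V, ip y x = conjc (ip x y).
Hypothesis Ipos : forall x : V, 0 <= ip x x.
Hypothesis Idef : forall x : V, ip x x = 0 -> x = 0.
Hypothesis Icomp : hcomplete ip.

Local Notation Qi := (Q ip).
Local Notation Ni := (N ip).

Lemma hnormE x : hnorm ip x = Ni x. Proof. by []. Qed.

Lemma Q0_eq x : Qi x = 0 -> x = 0.
Proof. by move=> h; apply: Idef; rewrite (Preal IL IH Ipos) h. Qed.

Definition closedM (M : V -> Prop) := forall (u : nat -> V) l, (forall n, M (u n)) ->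
  (forall e, 0 < e -> exists K, forall n, (K <= n)%N -> hnorm ip (u n - l) < e) -> M l.
Definition subsp (M : V -> Prop) := M 0 /\ forall a x y, M x -> M y -> M (a *: x + y).

Lemma proj M x : subsp M -> closedM M -> exists m, M m /\ forall k, M k -> ip (x - m) k = 0.
Proof.
move=> [M0 Mlin] Mcl.
pose E := [set - Qi (x - m) | m in M]%classic.
have E0 : E !=set0 by exists (- Qi (x - 0)), 0.
have Eub : ubound E 0 by move=> _ [m _ <-]; rewrite oppr_le0 (Q_ge0 IL IH Ipos).
have hsE : has_sup E by split => //; exists 0.
set D := - sup E.
have D0 : 0 <= D by rewrite /D oppr_ge0; apply: ge_sup.
have Hlow m : M m -> D <= Qi (x - m).
  move=> Mm; rewrite /D lerNl; apply: (sup_upper_bound hsE); by exists m.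
have Happ n : exists m, M m /\ Qi (x - m) < D + (n.+1%:R)^-1.
  have e0 : 0 < (n.+1%:R : R)^-1 by rewrite invr_gt0 ltr0Sn.
  have [_ [m Mm <-] h] := @sup_adherent _ E _ e0 hsE.
  exists m; split => //; rewrite /D; move: h; set s := sup E; set q := Qi _; move=> h; set t := _^-1 in h *; have {}h : s - t < - q := h; lra.
have [ms Hms] := @choice _ _ _ Happ.
have Mms n : M (ms n) := (Hms n).1.
(* parallelogram *)
have Mmid i j : M (2^-1 *: (ms i + ms j)).
  by rewrite scalerDr -[_ *: ms j]addr0; apply: (Mlin) => //; apply: (Mlin).
have vid i j : (x - ms i) + (x - ms j) = 2 *: (x - 2^-1 *: (ms i + ms j)).
  rewrite scalerBr scalerA mulfV ?pnatr_eq0 // scale1r scaler_nat mulr2n.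
  by rewrite opprD addrACA.
have Hc i j : Qi (ms i - ms j) <= 2 * (i.+1%:R)^-1 + 2 * (j.+1%:R)^-1.
  have pl := Q_add IL IH Ipos (x - ms i) (x - ms j).
  have pl2 := Q_add IL IH Ipos (x - ms i) (- (x - ms j)).
  rewrite (QN IL IH Ipos) (PNr IL IH Ipos) REN in pl2.
  have e1 : x - ms i - (x - ms j) = - (ms i - ms j) by rewrite !opprB addrC addrA subrK.
  rewrite e1 in pl2.
  rewrite (QN IL IH Ipos) in pl2.
  rewrite vid (QZ IL IH Ipos) nc2 in pl.
  have := Hlow _ (Mmid i j); have := (Hms i).2; have := (Hms j).2.
  move: pl pl2; set a := Qi (ms i - ms j); set b := Qi (x - ms i); set b' := Qi (x - ms j).
  set w := Qi (x - _); set r := RE _; set ei := (i.+1%:R)^-1; set ej := (j.+1%:R)^-1.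
  move=> pl pl2 h1 h2 h3.
  have {}pl : 2 ^+ 2 * w = b + b' + 2 * r := pl.
  have {}pl2 : a = b + b' + 2 * - r := pl2.
  have {}h1 : b' < D + ej := h1.
  have {}h2 : b < D + ei := h2.
  have {}h3 : D <= w := h3.
  have -> : a = 2 * b + 2 * b' - 2 ^+ 2 * w by rewrite pl pl2; ring.
  lra.
have [l hl] : exists l, forall e, 0 < e -> exists K, forall n, (K <= n)%N -> hnorm ip (ms n - l) < e.
  apply: Icomp => e e0.
  have e4 : 0 < e ^+ 2 / 4 by rewrite divr_gt0 // exprn_gt0.
  have [K hK] := inv_nat_small e4.
  exists K => m n hm hn; rewrite hnormE /N.
  apply: (@lt_le_trans _ _ (Num.sqrt (e ^+ 2))); last by rewrite sqrtr_sqr ger0_norm // ltW.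
  rewrite ltr_sqrt ?exprn_gt0 //.
  apply: le_lt_trans (Hc m n) _.
  have := inv_nat_le R hm; have := inv_nat_le R hn.
  set em := (m.+1%:R)^-1; set en := (n.+1%:R)^-1; set eK := (K.+1%:R)^-1 in hK *.
  move=> h1 h2.
  have {}h1 : en <= eK := h1. have {}h2 : em <= eK := h2.
  have {}hK : eK < e ^+ 2 / 4 := hK.
  lra.
have Ml : M l := Mcl ms l Mms hl.
have QxlD : Qi (x - l) <= D.
  rewrite leNgt; apply/negP => hlt.
  set del := Ni (x - l) - Num.sqrt D.
  have del0 : 0 < del.
    rewrite /del subr_gt0 /N ltr_sqrt //; apply: le_lt_trans hlt; exact: D0.
  have del2 : 0 < del / 2 by rewrite divr_gt0.
  have [K1 hK1] := hl _ del2.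
  have [K2 hK2] := inv_nat_small (exprn_gt0 2 del2).
  set n := maxn K1 K2.
  have h1 := hK1 n (leq_maxl _ _).
  have h2 : (n.+1%:R)^-1 < (del / 2) ^+ 2.
    by apply: le_lt_trans (inv_nat_le R (leq_maxr K1 K2)) hK2.
  have h3 : Ni (x - ms n) <= Num.sqrt D + Num.sqrt ((n.+1%:R)^-1).
    apply: le_trans (sqrtD_le D0 _); last by rewrite invr_ge0 ler0n.
    by apply: sqrt_le; apply: ltW; exact: (Hms n).2.
  have h4 : Num.sqrt ((n.+1%:R : R)^-1) < del / 2.
    apply: (@lt_le_trans _ _ (Num.sqrt ((del / 2) ^+ 2))); last by rewrite sqrtr_sqr ger0_norm // ltW.
    by rewrite ltr_sqrt ?exprn_gt0.
  have h5 : Ni (x - l) <= Ni (x - ms n) + Ni (ms n - l).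
    by have := N_tri IL IH Ipos (x - ms n) (ms n - l); rewrite addrA subrK.
  rewrite hnormE in h1.
  move: h1 h3 h4 h5; set A1 := Ni (ms n - l); set A2 := Ni (x - ms n);
    set A3 := Num.sqrt ((n.+1%:R)^-1); set A4 := Ni (x - l); set sD := Num.sqrt D.
  move=> h1 h3 h4 h5.
  have {}h1 : A1 < del / 2 := h1. have {}h3 : A2 <= sD + A3 := h3.
  have {}h4 : A3 < del / 2 := h4. have {}h5 : A4 <= A2 + A1 := h5.
  have hd : del = A4 - sD by [].
  lra.
exists l; split => // k Mk.
set c := ip (x - l) k.
set s0 := (Qi k + 1)^-1.
have qk := Q_ge0 IL IH Ipos k.
have s00 : 0 < s0 by rewrite invr_gt0; lra.
have e : s0 * (Qi k + 1) = 1 by rewrite mulVf //; apply: lt0r_neq0; lra.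
have My : M (l + (rc s0 * c) *: k) by rewrite addrC; apply: (Mlin).
have := Hlow _ My.
have -> : x - (l + (rc s0 * c) *: k) = (x - l) - (rc s0 * c) *: k by rewrite opprD addrA.
rewrite (Qexp IL IH Ipos) -/c.
have n0 : 0 <= nc c ^+ 2 by rewrite sqr_ge0.
move: n0 QxlD; set n2 := nc c ^+ 2; set q := Qi k; set qx := Qi (x - l).
move=> n0 h1 h2.
have {}h1 : qx <= D := h1.
have {}h2 : D <= qx - 2 * s0 * n2 + s0 ^+ 2 * n2 * q := h2.
have e2 : s0 ^+ 2 * n2 * q = s0 * n2 - s0 ^+ 2 * n2.
  by rewrite -[X in X - _]mulr1 -e; ring.
rewrite e2 in h2.
have h3 : 0 <= s0 ^+ 2 * n2 by rewrite mulr_ge0 // sqr_ge0.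
have : n2 <= 0 by nra.
move=> hn; have : nc c = 0.
  by apply/eqP; rewrite -(@sqrf_eq0 _ (nc c)) eq_le hn n0.
by move/nc_eq0.
Qed.

Lemma riesz (f : V -> R[i]) (Kf : R) :
  (forall a x y, f (a *: x + y) = a * f x + f y) ->
  (forall x, nc (f x) <= Kf * Ni x) -> exists w, forall v, f v = ip v w.
Proof.
move=> fL fB.
pose F := fun (x _ : V) => f x.
have FL : forall a x y z, F (a *: x + y) z = a * F x z + F y z by move=> *; exact: fL.
have f0 : f 0 = 0 := P0l FL 0.
have fB' x y : f (x - y) = f x - f y := PBl FL x y x.
have fZ a x : f (a *: x) = a * f x := PZl FL a x x.
pose M := fun v => f v = 0.
have sM : subsp M.
  by split => [|a x y]; rewrite /M // fL => -> ->; rewrite mulr0 addr0.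
have cM : closedM M.
  move=> u l Mu hl; apply: nc_eq0; apply/eqP; rewrite eq_le nc_ge0 andbT.
  apply: (le0_small (normr_ge0 Kf)) => e e0.
  have [K hK] := hl e e0; have h := hK K (leqnn K).
  have -> : f l = f (l - u K) by rewrite fB' Mu subr0.
  apply: le_trans (fB _) _.
  apply: le_trans (ler_wpM2r (N_ge0 IL IH Ipos _) (real_ler_norm (num_real Kf))) _.
  apply: ler_wpM2l; first exact: normr_ge0.
  by rewrite (NB IL IH Ipos); apply: ltW.
case: (pselect (forall v, f v = 0)) => [h0 | /existsNP [x0 fx0]].
  by exists 0 => v; rewrite h0 (P0r IL IH Ipos).
have [m [Mm hm]] := proj x0 sM cM.
set p := x0 - m in hm *.
have fp : f p = f x0 by rewrite fB' Mm subr0.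
have fp0 : f p != 0 by rewrite fp; apply/eqP.
have pp0 : ip p p != 0.
  by apply/eqP => h; apply: fx0; rewrite -fp (Idef h) f0.
exists (conjc (f p / ip p p) *: p) => v.
have Mk : M (v - (f v / f p) *: p) by rewrite /M fB' fZ divfK // subrr.
have h1 := hm _ Mk.
rewrite (PBr IL IH Ipos) (PZr IL IH Ipos) in h1.
have cpp : conjc (ip p p) = ip p p by rewrite (Preal IL IH Ipos) cjR.
rewrite (PZr IL IH Ipos) (cjK (f p / ip p p)) (IH p v).
have -> : ip p v = conjc (f v / f p) * ip p p by apply/eqP; rewrite -subr_eq0 h1.
rewrite (cjM (conjc (f v / f p)) (ip p p)) cjK cpp.
by field; rewrite fp0 pp0.
Qed.

Lemma adjoint_spec (S : V -> V) : bounded_op ip S ->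
  forall x y, ip (S x) y = ip x (adjoint ip S y).
Proof.
move=> [SL [KS hKS]].
have ex : exists T' : V -> V, forall x y, ip (S x) y = ip x (T' y).
  have h y : exists w, forall v, ip (S v) y = ip v w.
    apply: (@riesz _ (KS * Ni y)).
    - by move=> a x z; rewrite SL IL.
    - move=> v; apply: le_trans (CS IL IH Ipos (S v) y) _.
      rewrite mulrAC; apply: ler_wpM2r; [exact: N_ge0 | exact: hKS].
  have [T' hT'] := @choice _ _ _ h.
  by exists T' => x y; exact: hT'.
exact: (epsilon_spec _ _ ex).
Qed.
End Hil.

Section Growth.
Variable R : realType.
Lemma bern (x : R) (n : nat) : 0 <= x -> 1 + n%:R * x <= (1 + x) ^+ n.
Proof.
move=> x0; elim: n => [|n IHn]; first by rewrite mul0r addr0 expr0.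
rewrite exprS -natr1.
have h : 0 <= n%:R * x by rewrite mulr_ge0 // ler0n.
have h2 : 0 <= 1 + x by lra.
have := ler_wpM2l h2 IHn.
set y := (1 + x) ^+ n; set m := n%:R => h3.
have {}h3 : (1 + x) * (1 + m * x) <= (1 + x) * y := h3.
nra.
Qed.

Lemma growth (q e0 K C : R) (e : nat -> R) : 0 < K -> 0 <= C -> 0 <= q -> e 0%N = e0 ->
  (forall n, e n ^+ 2 <= e n.+1 * q) -> (forall n, e n <= C * K ^+ (2 ^ n)) ->
  e0 <= K * q.
Proof.
move=> K0 C0 q0 E0 Erec Eup; rewrite leNgt; apply/negP => hlt.
have [qz|qp] := eqVneq q 0.
  have := Erec 0%N; rewrite qz mulr0 E0.
  have : 0 < e0 by move: hlt; rewrite qz mulr0.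
  move=> h1 h2; have : 0 < e0 ^+ 2 by rewrite exprn_gt0.
  by rewrite ltNge h2.
have qpos : 0 < q by rewrite lt_def qp q0.
set r := e0 / q.
have er : q * r = e0 by rewrite /r mulrC divfK.
have rK : K < r by rewrite /r ltr_pdivlMr // mulrC.
have low n : q * r ^+ (2 ^ n) <= e n.
  elim: n => [|n IHn]; first by rewrite expn0 expr1 er E0.
  have hge : 0 <= q * r ^+ (2 ^ n) by rewrite mulr_ge0 // exprn_ge0 // ltW // (lt_trans K0).
  have h1 : (q * r ^+ (2 ^ n)) ^+ 2 <= e n ^+ 2.
    by rewrite ler_pXn2r // ?nnegrE // (le_trans hge IHn).
  have h2 := le_trans h1 (Erec n).
  rewrite exprMn -exprM -expnSr in h2.
  rewrite -(ler_pM2r qpos); apply: le_trans h2; rewrite le_eqVlt; apply/orP; left; apply/eqP; ring.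
set rho := r / K.
have rho1 : 1 < rho by rewrite /rho ltr_pdivlMr // mul1r.
have rr n : r ^+ n = rho ^+ n * K ^+ n by rewrite -exprMn /rho divfK // gt_eqF.
have bnd n : q * rho ^+ (2 ^ n) <= C.
  have h := le_trans (low n) (Eup n); rewrite rr mulrA in h.
  by rewrite -(ler_pM2r (exprn_gt0 (2 ^ n) K0)).
have [n hn] := exists_nat (C / (q * (rho - 1))).
have rho10 : 0 <= rho - 1 by lra.
have := bnd n; have := bern (2 ^ n) rho10.
rewrite (_ : 1 + (rho - 1) = rho); last by ring.
have hn2 : (n%:R : R) <= (2 ^ n)%:R by rewrite ler_nat ltnW // ltn_expl.
have hq1 : 0 < q * (rho - 1) by rewrite mulr_gt0 // subr_gt0.
rewrite ltr_pdivrMr // in hn.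
move: hn hn2; set N := (2 ^ n)%:R; set m := (n%:R : R); set pn := rho ^+ (2 ^ n).
move=> hn hn2 h1 h2.
have {}h1 : 1 + N * (rho - 1) <= pn := h1.
have {}h2 : q * pn <= C := h2.
have {}hn : C < m * (q * (rho - 1)) := hn.
nra.
Qed.
End Growth.

Section Lin.
Variables (R : realType) (V : lmodType R[i]) (T : V -> V).
Hypothesis TL : forall (a : R[i]) (x y : V), T (a *: x + y) = a *: T x + T y.
Lemma T0 : T 0 = 0.
Proof.
have := TL 1 0 0; rewrite scale1r addr0 scale1r => h.
by apply: (addrI (T 0)); rewrite addr0 -h.
Qed.
Lemma TD x y : T (x + y) = T x + T y.
Proof. by have := TL 1 x y; rewrite !scale1r. Qed.
Lemma TZ a x : T (a *: x) = a *: T x.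
Proof. by have := TL a x 0; rewrite addr0 T0 addr0. Qed.
Lemma TN x : T (- x) = - T x.
Proof. by rewrite -scaleN1r TZ scaleN1r. Qed.
Lemma TB x y : T (x - y) = T x - T y.
Proof. by rewrite TD TN. Qed.
End Lin.

Lemma IMD (R : realType) (x y : R[i]) : IM (x + y) = IM x + IM y. Proof. by case: x; case: y. Qed.

Section Main.
Local Open Scope classical_set_scope.
Variables (R : realType) (V : lmodType R[i]) (ip : V -> V -> R[i]) (A S : V -> V).
Hypothesis IL : forall (a : R[i]) (x y z : V), ip (a *: x + y) z = a * ip x z + ip y z.
Hypothesis IH : forall x y : V, ip y x = conjc (ip x y).
Hypothesis Ipos : forall x : V, 0 <= ip x x.
Hypothesis Idef : forall x : V, ip x x = 0 -> x = 0.
Hypothesis Icomp : hcomplete ip.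
Hypothesis AL : forall (a : R[i]) (x y : V), A (a *: x + y) = a *: A x + A y.
Variable KA : R.
Hypothesis AB : forall x, hnorm ip (A x) <= KA * hnorm ip x.
Hypothesis Apos : forall x, 0 <= ip (A x) x.
Hypothesis SL : forall (a : R[i]) (x y : V), S (a *: x + y) = a *: S x + S y.
Variable KS : R.
Hypothesis SB : forall x, hnorm ip (S x) <= KS * hnorm ip x.
Variable Rop : V -> V.
Hypothesis RL : forall (a : R[i]) (x y : V), Rop (a *: x + y) = a *: Rop x + Rop y.
Variable KR : R.
Hypothesis RB : forall x, hnorm ip (Rop x) <= KR * hnorm ip x.
Hypothesis hR : forall x, A (Rop x) = adjoint ip S (A x).

Lemma A_herm x y : ip (A y) x = conjc (ip (A x) y).
Proof.
have im0 w : IM (ip (A w) w) = 0 by apply: ger0_Im.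
have h1 := im0 (x + y).
rewrite (TD AL) (PDl IL) !(PDr IL IH Ipos) in h1.
have h2 := im0 (x + 'i%C *: y).
rewrite (TD AL) (TZ AL) (PDl IL) (PZl IL) !(PDr IL IH Ipos) !(PZr IL IH Ipos) in h2.
move: h1 h2 (im0 x) (im0 y).
set a := ip (A x) y; set b := ip (A y) x; set cx := ip (A x) x; set cy := ip (A y) y.
case: a => a1 a2; case: b => b1 b2; case: cx => c1 c2; case: cy => d1 d2.
simpc => /= h1 h2 h3 h4.
by congr (_ +i* _)%C; lra.
Qed.

Local Notation P := (ipA ip A).
Local Notation Ni := (N ip).
Lemma PL_A a x y z : P (a *: x + y) z = a * P x z + P y z.
Proof. by rewrite /ipA AL IL. Qed.
Lemma PH_A x y : P y x = conjc (P x y). Proof. exact: A_herm. Qed.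
Lemma Ppos_A x : 0 <= P x x. Proof. exact: Apos. Qed.
Local Notation QA := (Q P).
Local Notation NA := (N P).

Lemma bS : bounded_op ip S. Proof. by split => //; exists KS. Qed.
Lemma adjS x y : ip (S x) y = ip x (adjoint ip S y).
Proof. exact: (adjoint_spec IL IH Ipos Idef Icomp bS). Qed.

Lemma P_Rop u v : P (Rop u) v = P u (S v).
Proof.
rewrite /ipA hR (IH v (adjoint ip S (A u))) -adjS.
by rewrite -(IH (S v) (A u)).
Qed.

Lemma sharp_A x : A (sharpA ip A S x) = A (Rop x).
Proof.
pose M := fun k => A k = 0.
have sM : subsp M.
  by split => [|a u w]; rewrite /M ?(T0 AL) // AL => -> ->; rewrite scaler0 addr0.
have cM : closedM ip M.
  move=> u l Mu hl; apply: (Q0_eq IL IH Ipos Idef).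
  have h : Ni (A l) <= 0.
    apply: (le0_small (normr_ge0 KA)) => e e0.
    have [K hK] := hl e e0; have h := hK K (leqnn K).
    have -> : A l = A (l - u K) by rewrite (TB AL) Mu subr0.
    apply: le_trans (AB _) _.
    apply: le_trans (ler_wpM2r (N_ge0 IL IH Ipos _) (real_ler_norm (num_real KA))) _.
    apply: ler_wpM2l; first exact: normr_ge0.
    by rewrite (NB IL IH Ipos); apply: ltW.
  have h0 : Ni (A l) = 0 by apply/eqP; rewrite eq_le h N_ge0.
  move: h0; rewrite /N => /eqP; rewrite sqrtr_eq0 => hq.
  by apply/eqP; rewrite eq_le hq (Q_ge0 IL IH Ipos).
have [m [Mm hm]] := proj IL IH Ipos Icomp (Rop x) sM cM.
have ex : exists x0, (forall k, A k = 0 -> ip x0 k = 0) /\ (forall z, ip (A x0 - adjoint ip S (A x)) (A z) = 0).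
  exists (Rop x - m); split; first exact: hm.
  by move=> z; rewrite (TB AL) Mm subr0 -hR subrr (P0l IL).
have h2 : forall z, ip (A (sharpA ip A S x) - A (Rop x)) (A z) = 0.
  by move=> z; rewrite hR; exact: (epsilon_spec _ _ ex).2 z.
apply/eqP; rewrite -subr_eq0; apply/eqP; apply: Idef.
by have := h2 (sharpA ip A S x - Rop x); rewrite (TB AL).
Qed.

Lemma P_sharp u v : P (sharpA ip A S u) v = P u (S v).
Proof. by rewrite {1}/ipA sharp_A; exact: P_Rop. Qed.

Let T u := Rop (S u).
Lemma P_T u v : P (T u) v = P (S u) (S v). Proof. exact: P_Rop. Qed.
Lemma P_Tsym u v : P (T u) v = P u (T v).
Proof. by rewrite P_T (PH_A (T v) u) P_T -(PH_A (S v) (S u)). Qed.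
Lemma P_Tn n u v : P (iter n T u) v = P u (iter n T v).
Proof.
elim: n u v => [//|n IHn] u v.
by rewrite iterS P_Tsym IHn -iterSr.
Qed.

Let KT := `|KR| * `|KS|.
Lemma KT_ge0 : 0 <= KT. Proof. by rewrite mulr_ge0. Qed.
Lemma NT u : Ni (T u) <= KT * Ni u.
Proof.
have hN := N_ge0 IL IH Ipos.
apply: le_trans (RB _) _.
apply: le_trans (ler_wpM2r (hN _) (real_ler_norm (num_real KR))) _.
rewrite /KT -mulrA; apply: ler_wpM2l; first exact: normr_ge0.
apply: le_trans (SB _) _.
exact: (ler_wpM2r (hN _) (real_ler_norm (num_real KS))).
Qed.
Lemma NTn n u : Ni (iter n T u) <= KT ^+ n * Ni u.
Proof.
elim: n => [|n IHn]; first by rewrite expr0 mul1r.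
rewrite iterS exprS -mulrA; apply: le_trans (NT _) _.
by apply: ler_wpM2l; [exact: KT_ge0|].
Qed.

Lemma QS_bound x : QA (S x) <= (KT + 1) * QA x.
Proof.
pose e n := RE (P (iter (2 ^ n) T x) x).
have hN := N_ge0 IL IH Ipos.
apply: (@growth _ _ _ _ (`|KA| * Ni x ^+ 2) e).
- have := KT_ge0; lra.
- by rewrite mulr_ge0 // sqr_ge0.
- exact: (Q_ge0 PL_A PH_A Ppos_A).
- by rewrite /e expn0 /= P_T.
- move=> n; rewrite /e.
  set y := iter (2 ^ n) T x.
  have h1 : RE (P y x) ^+ 2 <= nc (P y x) ^+ 2 by rewrite nc2E lerDl sqr_ge0.
  apply: le_trans h1 _; apply: le_trans (CS2 PL_A PH_A Ppos_A y x) _.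
  rewrite expnS mul2n -addnn iterD -/y P_Tn -/y.
  exact: lexx.
- move=> n; rewrite /e; set m := (2 ^ n)%N.
  apply: le_trans (RE_le_nc _) _.
  apply: le_trans (CS IL IH Ipos _ _) _.
  have h1 := AB (iter m T x).
  have h2 := NTn m x.
  have h3 : hnorm ip (A (iter m T x)) <= `|KA| * Ni (iter m T x).
    apply: le_trans h1 _; exact: (ler_wpM2r (hN _) (real_ler_norm (num_real KA))).
  have h4 := hN (A (iter m T x)); have h5 := hN x; have h6 := hN (iter m T x).
  have h7 : 0 <= KT ^+ m by rewrite exprn_ge0 // KT_ge0.
  move: h2 h3 h4 h5 h6 h7; rewrite -/(Ni _).
  set a := Ni (A _); set b := Ni (iter _ _ _); set c := Ni x; set k := KT ^+ m.
  move=> h2 h3 h4 h5 h6 h7.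
  have {}h2 : b <= k * c := h2. have {}h3 : a <= `|KA| * b := h3.
  have hk : 0 <= `|KA| by [].
  have : a * c <= `|KA| * (k * c) * c by apply: ler_wpM2r => //; apply: le_trans h3 _; apply: ler_wpM2l.
  have hk2 : k <= (KT + 1) ^+ m.
    by apply: lerXn2r; rewrite ?nnegrE ?KT_ge0 //; [have := KT_ge0; lra | lra].
  move=> h8; apply: le_trans h8 _.
  have -> : `|KA| * (k * c) * c = `|KA| * c ^+ 2 * k by ring.
  by apply: ler_wpM2l => //; rewrite mulr_ge0 // sqr_ge0.
Qed.


Let c := Num.sqrt (KT + 1).
Lemma c_ge0 : 0 <= c. Proof. exact: sqrtr_ge0. Qed.
Lemma NS x : NA (S x) <= c * NA x.
Proof.
rewrite /N /c -sqrtrM; last by have := KT_ge0; lra.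
exact: sqrt_le (QS_bound x).
Qed.
Lemma Nsharp x : NA (sharpA ip A S x) <= c * NA x.
Proof.
set y := sharpA ip A S x.
have h1 : NA y ^+ 2 <= NA x * (c * NA y).
  rewrite (N2 PL_A PH_A Ppos_A) {1}/Q P_sharp.
  apply: le_trans (RE_le_nc _) _; apply: le_trans (CS PL_A PH_A Ppos_A _ _) _.
  apply: ler_wpM2l; first exact: N_ge0 PL_A PH_A Ppos_A _.
  exact: NS.
have h2 := N_ge0 PL_A PH_A Ppos_A y; have h3 := N_ge0 PL_A PH_A Ppos_A x.
have h4 := c_ge0.
move: h1 h2 h3 h4; set a := NA y; set b := NA x => h1 h2 h3 h4.
have {}h1 : a ^+ 2 <= b * (c * a) := h1.
have h5 : 0 <= c * b by rewrite mulr_ge0.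
nra.
Qed.

Lemma sup_ge0' (E : set R) : (forall x, E x -> 0 <= x) -> has_ubound E -> 0 <= sup E.
Proof.
move=> h hub; case: (pselect (E !=set0)) => [[x Ex]|hn].
  exact: le_trans (h x Ex) (ub_le_sup hub Ex).
have -> : E = set0 by apply/seteqP; split => x // Ex; apply: hn; exists x.
by rewrite sup0.
Qed.

Lemma numrad_ub (X : V -> V) cX : 0 <= cX -> (forall z, NA (X z) <= cX * NA z) ->
  (forall z, NA z = 1 -> nc (P (X z) z) <= numradA ip A X) /\ 0 <= numradA ip A X.
Proof.
move=> c0 hX.
have hub : has_ubound [set nc (ipA ip A (X z) z) | z in unit_sphereA ip A].
  exists cX => _ [z hz <-].
  apply: le_trans (CS PL_A PH_A Ppos_A _ _) _.
  have hz' : NA z = 1 := hz.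
  by rewrite hz' mulr1; apply: le_trans (hX z) _; rewrite hz' mulr1.
split.
  by move=> z hz; rewrite /numradA; apply: ub_le_sup => //; exists z.
by rewrite /numradA; apply: sup_ge0' => // _ [z _ <-]; exact: nc_ge0.
Qed.

Lemma opnorm_ub (X : V -> V) cX : 0 <= cX -> (forall z, NA (X z) <= cX * NA z) ->
  (forall z, NA z = 1 -> NA (X z) <= opnormA ip A X) /\ 0 <= opnormA ip A X.
Proof.
move=> c0 hX.
have hub : has_ubound [set normA ip A (X z) | z in unit_sphereA ip A].
  exists cX => _ [z hz <-].
  have hz' : NA z = 1 := hz.
  by apply: le_trans (hX z) _; rewrite hz' mulr1.
split.
  by move=> z hz; rewrite /opnormA; apply: ub_le_sup => //; exists z.
by rewrite /opnormA; apply: sup_ge0' => // _ [z _ <-]; exact: N_ge0 PL_A PH_A Ppos_A _.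
Qed.

Lemma main_ineq :
  dnumradA ip A S ^+ 2 <=
    numradA ip A (fun x => sharpA ip A S (S x) + S x) ^+ 2
    + numradA ip A (fun x => sharpA ip A S (S (S x)))
    + 2^-1 * opnormA ip A (fun x => sharpA ip A S (S (sharpA ip A S (S x))) + sharpA ip A S (S x)).
Proof.
set X1 := (fun x => sharpA ip A S (S x) + S x).
set X2 := (fun x => sharpA ip A S (S (S x))).
set X3 := (fun x => sharpA ip A S (S (sharpA ip A S (S x))) + sharpA ip A S (S x)).
have hc := c_ge0.
have hNz := N_ge0 PL_A PH_A Ppos_A.
have hX1 z : NA (X1 z) <= (c * c + c) * NA z.
  apply: le_trans (N_tri PL_A PH_A Ppos_A _ _) _.
  rewrite mulrDl -mulrA; apply: lerD; last exact: NS.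
  apply: le_trans (Nsharp _) _; apply: ler_wpM2l => //; exact: NS.
have hX2 z : NA (X2 z) <= c * c * c * NA z.
  apply: le_trans (Nsharp _) _; rewrite -!mulrA; apply: ler_wpM2l => //.
  apply: le_trans (NS _) _; apply: ler_wpM2l => //; exact: NS.
have hX3 z : NA (X3 z) <= (c * c * c * c + c * c) * NA z.
  apply: le_trans (N_tri PL_A PH_A Ppos_A _ _) _.
  rewrite mulrDl; apply: lerD.
    apply: le_trans (Nsharp _) _; rewrite -!mulrA; apply: ler_wpM2l => //.
    apply: le_trans (NS _) _; apply: ler_wpM2l => //.
    apply: le_trans (Nsharp _) _; apply: ler_wpM2l => //; exact: NS.
  apply: le_trans (Nsharp _) _; rewrite -!mulrA; apply: ler_wpM2l => //; exact: NS.
have [w1ub w1ge] := numrad_ub (addr_ge0 (mulr_ge0 hc hc) hc) hX1.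
have [w2ub w2ge] := numrad_ub (mulr_ge0 (mulr_ge0 hc hc) hc) hX2.
have [w3ub w3ge] := opnorm_ub (addr_ge0 (mulr_ge0 (mulr_ge0 (mulr_ge0 hc hc) hc) hc) (mulr_ge0 hc hc)) hX3.
set w1 := numradA ip A X1 in w1ub w1ge *.
set w2 := numradA ip A X2 in w2ub w2ge *.
set w3 := opnormA ip A X3 in w3ub w3ge *.
have RHS0 : 0 <= w1 ^+ 2 + w2 + 2^-1 * w3.
  by rewrite addr_ge0 ?mulr_ge0 ?addr_ge0 ?sqr_ge0 // invr_ge0.
have elem z : NA z = 1 -> nc (P (S z) z) ^+ 2 + NA (S z) ^+ 4 <= w1 ^+ 2 + w2 + 2^-1 * w3.
  move=> hz.
  have Qz : QA z = 1 by rewrite -(N2 PL_A PH_A Ppos_A) hz expr1n.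
  set s := P (S z) z; set t := QA (S z).
  have t0 : 0 <= t := Q_ge0 PL_A PH_A Ppos_A _.
  have hw1 : P (X1 z) z = rc t + s.
    by rewrite /X1 (PDl PL_A) P_sharp (Preal PL_A PH_A Ppos_A).
  have h1 := w1ub z hz; rewrite hw1 in h1.
  have hB := Buzano PL_A PH_A Ppos_A (S z) (sharpA ip A S (S z)) Qz.
  have hPz : P z (sharpA ip A S (S z)) = rc t.
    by rewrite (PH_A (sharpA ip A S (S z)) z) P_sharp (Preal PL_A PH_A Ppos_A) cjR.
  have hPab : P (S z) (sharpA ip A S (S z)) = P (X2 z) z.
    rewrite (PH_A (sharpA ip A S (S z)) (S z)) P_sharp /X2 P_sharp.
    by rewrite (PH_A (S z) (S (S z))).
  rewrite hPz hPab ncR ger0_norm // -/s in hB.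
  have h2 := w2ub z hz.
  have hX3e : RE (P (X3 z) z) = QA (sharpA ip A S (S z)) + t.
    rewrite /X3 (PDl PL_A) !P_sharp RED; congr (_ + _).
    by rewrite /Q P_sharp (PH_A (S (sharpA ip A S (S z))) (S z)) REJ.
  have h3 : RE (P (X3 z) z) <= w3.
    apply: le_trans (RE_le_nc _) _; apply: le_trans (CS PL_A PH_A Ppos_A _ _) _.
    by rewrite hz mulr1; exact: w3ub.
  rewrite hX3e in h3.
  have hn1 := nc_ge0 (rc t + s).
  have e1 : nc (rc t + s) ^+ 2 = (t + RE s) ^+ 2 + IM s ^+ 2.
    by rewrite nc2E RED IMD /= add0r.
  have e2 : nc s ^+ 2 = RE s ^+ 2 + IM s ^+ 2 := nc2E s.
  have e3 : NA (S z) ^+ 4 = t ^+ 2 by rewrite /t -(N2 PL_A PH_A Ppos_A (S z)) -exprM.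
  have hrs : - nc s <= RE s by have := RE_le_nc (- s); rewrite REN ncN; lra.
  have amgm : 2 * (NA (S z) * NA (sharpA ip A S (S z))) <= t + QA (sharpA ip A S (S z)).
    have := sqr_ge0 (NA (S z) - NA (sharpA ip A S (S z))); rewrite sqrrB.
    rewrite !(N2 PL_A PH_A Ppos_A) -/t.
    set a1 := NA _; set a2 := NA _; set q3 := QA _ => hh.
    rewrite -mulr_natl in hh.
    have {}hh : 0 <= t - 2 * (a1 * a2) + q3 := hh.
    lra.
  have h1sq : nc (rc t + s) ^+ 2 <= w1 ^+ 2.
    by rewrite ler_pXn2r ?nnegrE // (le_trans hn1 h1).
  rewrite e3.
  have hns := nc_ge0 s.
  move: e1 e2 h1sq hB h2 h3 amgm hrs hns.
  set ns := nc s; set rs := RE s; set ims := IM s; set n1 := nc (rc t + s).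
  set ab := NA (S z) * _; set n2 := nc (P (X2 z) z); set q2 := QA _.
  move=> e1 e2 h1sq hB h2' h3' amgm hrs hns.
  have {}e1 : n1 ^+ 2 = (t + rs) ^+ 2 + ims ^+ 2 := e1.
  have {}e2 : ns ^+ 2 = rs ^+ 2 + ims ^+ 2 := e2.
  have {}h1sq : n1 ^+ 2 <= w1 ^+ 2 := h1sq.
  have {}hB : 2 * ns * t <= ab + n2 := hB.
  have {}h2' : n2 <= w2 := h2'.
  have {}h3' : q2 + t <= w3 := h3'.
  have {}amgm : 2 * ab <= t + q2 := amgm.
  have {}hrs : - ns <= rs := hrs.
  have hp : 0 <= t * (rs + ns) by rewrite mulr_ge0 //; lra.
  have -> : 2^-1 * w3 = w3 / 2 by rewrite mulrC.
  nra.
rewrite /dnumradA.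
set D := [set _ | z in _].
have ub : ubound D (Num.sqrt (w1 ^+ 2 + w2 + 2^-1 * w3)).
  by move=> _ [z hz <-]; apply: sqrt_le; exact: elem.
case: (pselect (D !=set0)) => [D0|Dn].
  have hs := ge_sup D0 ub.
  have s0 : 0 <= sup D.
    apply: sup_ge0' => [_ [z _ <-]|]; first exact: sqrtr_ge0.
    by exists (Num.sqrt (w1 ^+ 2 + w2 + 2^-1 * w3)).
  apply: le_trans (_ : sup D ^+ 2 <= Num.sqrt (w1 ^+ 2 + w2 + 2^-1 * w3) ^+ 2) _.
    by rewrite ler_pXn2r ?nnegrE ?sqrtr_ge0.
  by rewrite sqr_sqrtr.
have -> : D = set0 by apply/seteqP; split => x // Dx; apply: Dn; exists x.
by rewrite sup0 expr0n.
Qed.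
End Main.


Unset Implicit Arguments.
Theorem corollary2p3 (R : realType) (V : lmodType R[i]) (ip : V -> V -> R[i])
  (A S : V -> V) :
  is_hilbert ip -> positive_op ip A -> in_BA ip A S ->
  dnumradA ip A S ^+ 2 <=
    numradA ip A (fun x => sharpA ip A S (S x) + S x) ^+ 2
    + numradA ip A (fun x => sharpA ip A S (S (S x)))
    + 2^-1 * opnormA ip A (fun x => sharpA ip A S (S (sharpA ip A S (S x))) + sharpA ip A S (S x)).
Proof.
move=> [[IL [IH [Ipos Idef]]] Icomp] [[AL [KA AB]] Apos] [[SL [KS SB]] [Rop [[RL [KR RB]] hR]]].
exact: (main_ineq IL IH Ipos Idef Icomp AL AB Apos SL SB RB hR).
Qed.
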